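(* Let $a,q$ be complex numbers, let $F(z)=\sum_{n=0}^{\infty}a_nz^n\in\mathbb{C}[[z]]$ and for $k\ge0$ let $F_k(z)=\sum_{i=0}^ka_iz^i$ be its $k$-th truncation. Suppose that $$\frac{F(z)}{1-az}=\sum_{n=0}^{\infty}\frac{c_nz^{n}}{1-azq^n}$$ in $\mathbb{C}[[z]]$ with coefficients $c_n$ independent of $z$. Then $c_0=a_0$ and for $n\ge1$, $$c_n=\sum_{k=0}^{n-1}g_{n-k}(q)\,q^{(n-k)k}\,[z^{n}]\Big\{\frac{F(z)-F_k(z)}{1-az}\Big\},$$ where the polynomials $g_n(q)$ ($n\ge1$) are defined recursively by $$g_n(q)=1-\sum_{i=1}^{n-1}g_{n-i}(q)\,q^{(n-i)i}.$$
   Context: $[z^m]\{f\}$ denotes the coefficient of $z^m$ in the formal power series $f$; $1/(1-az)$ and $1/(1-azq^n)$ are expanded as geometric series in $z$. Empty sums are $0$ (so $g_1(q)=1$). *)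

(* Defs.v *)
(* Formal power series over the complex numbers C = R[i]
   (R : realType, the real numbers) are represented by their coefficient
   sequences nat -> C. *)
From HB Require Import structures.
From mathcomp Require Import all_boot all_order all_algebra.
From mathcomp Require Import complex.
From mathcomp Require Import reals.
Set Implicit Arguments. Unset Strict Implicit. Unset Printing Implicit Defensive.
Import Order.TTheory GRing.Theory Num.Theory.
Local Open Scope ring_scope.

Section FPS.
Variable C : comRingType.

Definition fps := nat -> C.

Definition coefz (m : nat) (f : fps) : C := f m.

Definition fsub (f g : fps) : fps := fun m => f m - g m.

Definition fmul (f g : fps) : fps := fun m => \sum_(i < m.+1) f i * g (m - i)%N.

(* 1/(1 - b z) expanded as a geometric series *)
Definition geom (b : C) : fps := fun m => b ^+ m.

Definition fscale (c : C) (f : fps) : fps := fun m => c * f m.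

Definition zshift (n : nat) (f : fps) : fps :=
  fun m => if (n <= m)%N then f (m - n)%N else 0.

(* sum_{n>=0} s n, for a family where s n is divisible by z^n
   (so each coefficient is a finite sum: [z^m] only n <= m contribute) *)
Definition fsum_ord (s : nat -> fps) : fps := fun m => \sum_(n < m.+1) s n m.

Definition trunc (k : nat) (f : fps) : fps := fun m => if (m <= k)%N then f m else 0.

(* the polynomials g_n(q): g_n = 1 - sum_{i=1}^{n-1} g_{n-i} q^{(n-i) i}
   for n >= 1 (g_1 = 1); g_0 := 0 (unused). Defined with fuel. *)
Fixpoint gaux (fuel n : nat) : {poly C} :=
  match fuel with
  | 0 => 0
  | fuel'.+1 =>
      if n == 0%N then 0
      else 1 - \sum_(1 <= i < n) gaux fuel' (n - i)%N * 'X ^+ ((n - i) * i)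
  end.

Definition gpoly (n : nat) : {poly C} := gaux n n.

End FPS.

(* Main.v *)
Require Import Defs.
From HB Require Import structures.
From mathcomp Require Import all_boot all_order all_algebra.
From mathcomp Require Import complex.
From mathcomp Require Import reals.
From mathcomp Require Import zify ring.
Import Order.TTheory GRing.Theory Num.Theory.
Local Open Scope ring_scope.

Section Aux.
Variable C : comRingType.

Lemma gaux_fuel f1 f2 n : (n <= f1)%N -> (n <= f2)%N -> gaux C f1 n = gaux C f2 n.
Proof.
elim: f1 f2 n => [|f1 IH] [|f2] n h1 h2 /=.
- by [].
- by have -> : n = 0%N by lia.
- by have -> : n = 0%N by lia.
case: eqP => // nn; congr (1 - _); apply: eq_big_nat => i /andP[hi1 hi2].
by rewrite (IH f2) //; lia.
Qed.

Lemma gpoly_rec n : (0 < n)%N ->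
  gpoly C n = 1 - \sum_(1 <= i < n) gpoly C (n - i) * 'X ^+ ((n - i) * i).
Proof.
case: n => // n _; rewrite /gpoly /=; congr (1 - _).
apply: eq_big_nat => i /andP[hi1 hi2]; rewrite (@gaux_fuel n (n.+1 - i)) //; lia.
Qed.

Lemma gsum (q : C) N : (0 < N)%N ->
  \sum_(0 <= t < N) (gpoly C (N - t)).[q] * q ^+ ((N - t) * t) = 1.
Proof.
move=> hN; rewrite big_ltn // subn0 muln0 expr0 mulr1 {1}gpoly_rec //.
rewrite hornerD hornerN hornerC horner_sum.
rewrite (eq_bigr (fun t => (gpoly C (N - t)).[q] * q ^+ ((N - t) * t))) ?subrK // => t _.
by rewrite hornerM hornerXn.
Qed.

Lemma widen (f : nat -> C) k n : (k <= n)%N ->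
  \sum_(i < k.+1) f i = \sum_(i < n.+1) (if (i <= k)%N then f i else 0).
Proof.
move=> hk; rewrite (big_ord_widen n.+1 f) ?ltnS // big_mkcond.
by apply: eq_bigr => i _; rewrite ltnS.
Qed.

End Aux.

Lemma mainC (C : comNzRingType) (a q : C) (F c : nat -> C) :
  fmul F (geom a) =
    fsum_ord (fun n => zshift n (fscale (c n) (geom (a * q ^+ n)))) ->
  c 0%N = F 0%N /\
  (forall n : nat, (0 < n)%N ->
     c n = \sum_(k < n)
             (gpoly _ (n - k)%N).[q] * q ^+ ((n - k) * k)%N *
             coefz n (fmul (fsub F (trunc k F)) (geom a))).
Proof.
move=> h.
have HH : forall m, \sum_(i < m.+1) F i * a ^+ (m - i) =
    \sum_(j < m.+1) c j * a ^+ (m - j) * q ^+ (j * (m - j)).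
  move=> m; have := congr1 (fun f : fps C => f m) h.
  rewrite /fmul /fsum_ord /geom /zshift /fscale /= => ->.
  apply: eq_bigr => j _; rewrite -ltnS. rewrite ltn_ord. rewrite exprMn. rewrite -exprM mulrA. done.
split.
  have := HH 0%N; rewrite !big_ord1 /= !expr0 !mulr1 => ->.
  by [].
move=> n n0.
have T : forall k, (k < n)%N -> coefz n (fmul (fsub F (trunc k F)) (geom a)) =
   \sum_(j < n.+1) c j * a ^+ (n - j) *
      (q ^+ (j * (n - j)) - (if (j <= k)%N then q ^+ (j * (k - j)) else 0)).
  move=> k kn; rewrite /coefz /fmul /fsub /trunc /geom.
  under eq_bigr do rewrite mulrBl.
  rewrite sumrB HH.
  have E : \sum_(i < n.+1) (if (i <= k)%N then F i else 0) * a ^+ (n - i) =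
     a ^+ (n - k) * \sum_(j < n.+1)
        (if (j <= k)%N then c j * a ^+ (k - j) * q ^+ (j * (k - j)) else 0).
    rewrite (eq_bigr (fun i : 'I_n.+1 => if (i <= k)%N then F i * a ^+ (n - i) else 0)); last first.
      move=> i _; case: ifP => _; [reflexivity | exact: mul0r].
    have kn' : (k <= n)%N by apply: ltnW.
    rewrite -(@widen _ (fun i => F i * a ^+ (n - i)) k n kn').
    rewrite -(@widen _ (fun j => c j * a ^+ (k - j) * q ^+ (j * (k - j))) k n kn').
    rewrite -HH mulr_sumr.
    apply: eq_bigr => i _; have hi : (i <= k)%N by rewrite -ltnS ltn_ord.
    rewrite [RHS]mulrCA -exprD; congr (_ * a ^+ _); lia.
  rewrite E mulr_sumr -sumrB; apply: eq_bigr => j _; case: ifP => hj.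
    have -> : a ^+ (n - j) = a ^+ (n - k) * a ^+ (k - j).
      by rewrite -exprD; congr (a ^+ _); lia.
    ring.
  by rewrite mulr0 !subr0.
rewrite (eq_bigr (fun k : 'I_n => (gpoly C (n - k)).[q] * q ^+ ((n - k) * k) *
   \sum_(j < n.+1) c j * a ^+ (n - j) *
      (q ^+ (j * (n - j)) - (if (j <= k)%N then q ^+ (j * (k - j)) else 0))));
  last by move=> k _; rewrite T.
under eq_bigr do rewrite mulr_sumr.
rewrite exchange_big /= big_ord_recr /= big1 ?add0r.
  rewrite (eq_bigr (fun k : 'I_n => c n * ((gpoly C (n - k)).[q] * q ^+ ((n - k) * k)))).
    by rewrite -mulr_sumr -(@big_mkord _ 0 +%R n xpredT (fun k => (gpoly C (n - k)).[q] * q ^+ ((n - k) * k))) gsum // mulr1.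
  move=> k _; rewrite leqNgt ltn_ord subr0 subnn expr0 muln0 expr0; ring.
move=> j _; have jn := ltn_ord j.
rewrite (eq_bigr (fun k : 'I_n => c j * a ^+ (n - j) *
   ((gpoly C (n - k)).[q] * q ^+ ((n - k) * k) * q ^+ (j * (n - j)) -
     (if (j <= k)%N then (gpoly C (n - k)).[q] * q ^+ ((n - k) * k) * q ^+ (j * (k - j)) else 0)))); last first.
  by move=> k _; case: ifP => _; ring.
rewrite -mulr_sumr sumrB -mulr_suml -big_mkcond /=.
rewrite -(@big_mkord _ 0 +%R n xpredT (fun k => (gpoly C (n - k)).[q] * q ^+ ((n - k) * k))) gsum // mul1r.
have -> : \sum_(k < n | (j <= k)%N) (gpoly C (n - k)).[q] * q ^+ ((n - k) * k) * q ^+ (j * (k - j))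
   = \sum_(0 + j <= k < n) (gpoly C (n - k)).[q] * q ^+ ((n - k) * k) * q ^+ (j * (k - j)).
  rewrite add0n big_geq_mkord; reflexivity.
rewrite big_addn.
rewrite (eq_big_nat _ _ (F2 := fun t => (gpoly C (n - j - t)).[q] * q ^+ ((n - j - t) * t) * q ^+ (j * (n - j)))).
  by rewrite -mulr_suml gsum ?mul1r ?subrr ?mulr0 //; lia.
move=> t /andP[_ ht].
have -> : (n - (t + j) = n - j - t)%N by lia.
rewrite -!mulrA -!exprD; congr (_ * q ^+ _).
rewrite addnK; set M := (n - j - t)%N.
have -> : (n - j = M + t)%N by rewrite /M; lia.
clearbody M; rewrite !mulnDr (mulnC j M); lia.
Qed.

Local Open Scope complex_scope.

Theorem corollary2p4 (R : realType) (a q : R[i]) (F c : nat -> R[i]) :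
  (* F(z)/(1-az) = sum_{n>=0} c_n z^n / (1 - a z q^n) in C[[z]] *)
  fmul F (geom a) =
    fsum_ord (fun n => zshift n (fscale (c n) (geom (a * q ^+ n)))) ->
  c 0%N = F 0%N /\
  (forall n : nat, (0 < n)%N ->
     c n = \sum_(k < n)
             (gpoly _ (n - k)%N).[q] * q ^+ ((n - k) * k)%N *
             coefz n (fmul (fsub F (trunc k F)) (geom a))).
Proof. move=> h. have H := @mainC _ a q F c h. idtac "Y". exact H. Qed.
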